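(* Let $M$ be an affine manifold (affine subspace) of $\mathbb{R}^n$ and let $f,g$ be quadratic functions on $\mathbb{R}^n$ (i.e., of the form $x^TQx+q^Tx+c$ with $Q$ real symmetric, $q\in\mathbb{R}^n$, $c\in\mathbb{R}$, no definiteness assumed). Then the set $$C:=\{(f(x),g(x)) : x\in M\}+\mathbb{R}^2_+$$ is convex. *)

(* Defs.v *)
From mathcomp Require Import all_boot all_order all_algebra.
From mathcomp Require Import reals.
Set Implicit Arguments. Unset Strict Implicit. Unset Printing Implicit Defensive.
Import Order.TTheory GRing.Theory Num.Theory.
Local Open Scope ring_scope.

Definition quad_fun (R : realType) (n : nat) (Q : 'M[R]_n) (q : 'cV[R]_n) (c : R)
  (x : 'cV[R]_n) : R :=
  (x^T *m Q *m x) 0 0 + (q^T *m x) 0 0 + c.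

Definition is_quadratic (R : realType) (n : nat) (f : 'cV[R]_n -> R) : Prop :=
  exists (Q : 'M[R]_n) (q : 'cV[R]_n) (c : R),
    Q^T = Q /\ forall x, f x = quad_fun Q q c x.

Definition affine_manifold (R : realType) (n : nat) (M : 'cV[R]_n -> Prop) : Prop :=
  (exists x, M x) /\
  forall x y (t : R), M x -> M y -> M ((1 - t) *: x + t *: y).

Definition image_plus_orthant (R : realType) (n : nat) (M : 'cV[R]_n -> Prop)
  (f g : 'cV[R]_n -> R) (p : R * R) : Prop :=
  exists x, M x /\ exists (u v : R), 0 <= u /\ 0 <= v /\
    p = (f x + u, g x + v).

Definition convex2 (R : realType) (C : R * R -> Prop) : Prop :=
  forall (a b : R * R) (t : R), C a -> C b -> 0 <= t <= 1 ->
    C ((1 - t) * a.1 + t * b.1, (1 - t) * a.2 + t * b.2).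

(* Main.v *)
Require Import Defs.
From mathcomp Require Import all_boot all_order all_algebra.
From mathcomp Require Import reals ring lra.
Set Implicit Arguments. Unset Strict Implicit. Unset Printing Implicit Defensive.
Import Order.TTheory GRing.Theory Num.Theory.
Local Open Scope ring_scope.

Section OneD.

Variable R : realType.

Lemma root01 (a al t : R) : 0 < al -> 0 < t < 1 ->
  exists s, a * s * (s - 1) + al * (s - t) = 0 /\ 0 <= s <= 1.
Proof.
move=> hal /andP[ht0 ht1].
have [a0|a0] := eqVneq a 0.
  by exists t; rewrite a0; split; [ring | apply/andP; split; lra].
set D := (al - a) ^+ 2 + 4 * a * t * al.
have hD : 0 <= D.
  rewrite /D; have [ap|an] := ltP 0 a.
    have h1 : 0 <= (al - a) ^+ 2 by apply: sqr_ge0.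
    have h2 : 0 <= a * t by nra.
    have h3 : 0 <= a * t * al by nra.
    lra.
  have an' : a < 0 by rewrite lt_neqAle a0.
  have : (al + a) ^+ 2 >= 0 by apply: sqr_ge0.
  have h0 : a * al < 0 by nra.
  have h : 0 <= (a * al) * (t - 1) by nra.
  have e : (al - a) ^+ 2 + 4 * a * t * al = (al + a) ^+ 2 + 4 * ((a * al) * (t - 1)) by ring.
  rewrite e; lra.
set r := Num.sqrt D.
have hr0 : 0 <= r by apply: sqrtr_ge0.
have hr2 : r ^+ 2 = D by rewrite sqr_sqrtr.
exists ((a - al + r) / (2 * a)).
set s := (a - al + r) / (2 * a).
have hs : 2 * a * s = a - al + r.
  by rewrite /s mulrC -mulrA mulVf ?mulr1 // mulf_neq0 // pnatr_eq0.
split.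
  have e : 4 * a * (a * s * (s - 1) + al * (s - t)) =
     (2 * a * s) ^+ 2 + 2 * (al - a) * (2 * a * s) - 4 * a * t * al by ring.
  rewrite hs in e.
  have e3 : (a - al + r) ^+ 2 + 2 * (al - a) * (a - al + r) - 4 * a * t * al
     = r ^+ 2 - D by rewrite /D; ring.
  have e2 : 4 * a * (a * s * (s - 1) + al * (s - t)) = 0
    by rewrite e e3 hr2 subrr.
  move/eqP: e2; rewrite mulf_eq0 mulf_eq0 (negbTE a0) orbF pnatr_eq0 /=.
  by move/eqP.
have eA : D = (al - a) ^+ 2 + 4 * (a * t * al) by rewrite /D; ring.
have eB : D = (al + a) ^+ 2 + 4 * ((a * al) * (t - 1)) by rewrite /D; ring.
have [ap|an] := ltP 0 a.
  have hat : 0 < a * t by rewrite mulr_gt0.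
  have haa : 0 < a * al by rewrite mulr_gt0.
  have hp : 0 <= a * t * al by nra.
  have hq : (a * al) * (t - 1) <= 0 by nra.
  have h1 : al - a <= r.
    have [h|h] := leP (al - a) 0; first lra.
    have : (al - a) ^+ 2 <= r ^+ 2 by rewrite hr2 ?eA ?eB; lra.
    by rewrite ler_sqr ?nnegrE //; lra.
  have h2 : r <= al + a.
    have : r ^+ 2 <= (al + a) ^+ 2 by rewrite hr2 ?eA ?eB; lra.
    by rewrite ler_sqr ?nnegrE //; lra.
  apply/andP; split; nra.
have an' : a < 0 by rewrite lt_neqAle a0.
have hat : a * t < 0 by nra.
have haa : a * al < 0 by nra.
have hp : a * t * al <= 0 by nra.
have hq : 0 <= (a * al) * (t - 1) by nra.
have h1 : r <= al - a.
  have : r ^+ 2 <= (al - a) ^+ 2 by rewrite hr2 ?eA ?eB; lra.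
  by rewrite ler_sqr ?nnegrE //; lra.
have h2 : al + a <= r.
  have [h|h] := leP (al + a) 0; first lra.
  have : (al + a) ^+ 2 <= r ^+ 2 by rewrite hr2 ?eA ?eB; lra.
  rewrite ler_sqr ?nnegrE //; lra.
have hs1 : a * s <= 0 by lra.
have hs2 : a * (s - 1) >= 0.
  rewrite mulrBr mulr1. lra.
apply/andP; split; nra.
Qed.

Lemma root_ge1 (a al t : R) : a < 0 -> 0 < al -> 0 < t < 1 ->
  exists s, a * s * (s - 1) + al * (s - t) = 0 /\ 1 <= s.
Proof.
move=> an' hal /andP[ht0 ht1].
have a0 : a != 0 by rewrite lt_eqF.
set D := (al - a) ^+ 2 + 4 * a * t * al.
have eA : D = (al - a) ^+ 2 + 4 * (a * t * al) by rewrite /D; ring.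
have eB : D = (al + a) ^+ 2 + 4 * ((a * al) * (t - 1)) by rewrite /D; ring.
have hat : a * t < 0 by nra.
have haa : a * al < 0 by nra.
have hq : 0 <= (a * al) * (t - 1) by nra.
have hD : 0 <= D.
  have : (al + a) ^+ 2 >= 0 by apply: sqr_ge0.
  rewrite eB; lra.
set r := Num.sqrt D.
have hr0 : 0 <= r by apply: sqrtr_ge0.
have hr2 : r ^+ 2 = D by rewrite sqr_sqrtr.
exists ((a - al - r) / (2 * a)).
set s := (a - al - r) / (2 * a).
have hs : 2 * a * s = a - al - r.
  by rewrite /s mulrC -mulrA mulVf ?mulr1 // mulf_neq0 // pnatr_eq0.
split.
  have e : 4 * a * (a * s * (s - 1) + al * (s - t)) =
     (2 * a * s) ^+ 2 + 2 * (al - a) * (2 * a * s) - 4 * a * t * al by ring.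
  rewrite hs in e.
  have e3 : (a - al - r) ^+ 2 + 2 * (al - a) * (a - al - r) - 4 * a * t * al
     = r ^+ 2 - D by rewrite /D; ring.
  have e2 : 4 * a * (a * s * (s - 1) + al * (s - t)) = 0
    by rewrite e e3 hr2 subrr.
  move/eqP: e2; rewrite mulf_eq0 mulf_eq0 (negbTE a0) orbF pnatr_eq0 /=.
  by move/eqP.
have h2 : - (al + a) <= r.
  have [h|h] := leP (- (al + a)) 0; first lra.
  have : (al + a) ^+ 2 <= r ^+ 2 by rewrite hr2 eB; lra.
  rewrite -sqrrN ler_sqr ?nnegrE //; lra.
have hs2 : a * (s - 1) <= 0 by rewrite mulrBr mulr1; lra.
nra.
Qed.

Lemma oneD_pos (a d al be t : R) : 0 < al -> be < 0 -> 0 < t < 1 ->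
  exists s, a * s * (s - 1) + al * (s - t) <= 0 /\ d * s * (s - 1) + be * (s - t) <= 0.
Proof.
move=> hal hbe ht.
set k := - be * a + al * d.
have key : forall s, (- be) * (a * s * (s - 1) + al * (s - t)) +
   al * (d * s * (s - 1) + be * (s - t)) = k * (s * (s - 1)).
  by move=> s; rewrite /k; ring.
have [k0|k0] := leP 0 k.
  have [s [hs /andP[s0 s1]]] := root01 a hal ht.
  exists s; split; first by rewrite hs.
  have := key s; rewrite hs mulr0 add0r => e.
  have : k * (s * (s - 1)) <= 0.
    by apply: mulr_ge0_le0 => //; rewrite mulr_ge0_le0 // subr_le0.
  by rewrite -e pmulr_rle0.
have [a0|a0] := ltP a 0.
  have [s [hs s1]] := root_ge1 a0 hal ht.
  exists s; split; first by rewrite hs.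
  have := key s; rewrite hs mulr0 add0r => e.
  have : k * (s * (s - 1)) <= 0.
    rewrite nmulr_rle0 // mulr_ge0 //; lra.
  by rewrite -e pmulr_rle0.
have d0 : d < 0 by rewrite /k in k0; nra.
have hbe' : 0 < - be by lra.
have ht' : 0 < 1 - t < 1 by move: ht => /andP[? ?]; apply/andP; split; lra.
have [s0 [hs s1]] := root_ge1 d0 hbe' ht'.
exists (1 - s0).
have hs' : d * (1 - s0) * (1 - s0 - 1) + be * (1 - s0 - t) = 0.
  by rewrite -hs; ring.
split; last by rewrite hs'.
have := key (1 - s0); rewrite hs' mulr0 addr0 => e.
have : k * ((1 - s0) * (1 - s0 - 1)) <= 0.
  rewrite nmulr_rle0 // mulr_le0 //; lra.
by rewrite -e pmulr_rle0.
Qed.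

Lemma oneD (a d al be t : R) : 0 <= t <= 1 ->
  exists s, a * s * (s - 1) + al * (s - t) <= 0 /\ d * s * (s - 1) + be * (s - t) <= 0.
Proof.
move=> /andP[t0 t1].
have [->|tn0] := eqVneq t 0.
  by exists 0; split; rewrite !(mul0r, mulr0, subr0, addr0) ?oppr0.
have [->|tn1] := eqVneq t 1.
  by exists 1; split; rewrite !(subrr, mulr0, addr0).
have ht : 0 < t < 1 by apply/andP; split; rewrite lt_neqAle ?tn1 ?t1 // eq_sym tn0.
have [al0|al0] := leP 0 al.
  have [be0|be0] := leP 0 be.
    exists 0; split; rewrite !(mul0r, mulr0, add0r, sub0r); nra.
  have [al1|al1] := eqVneq al 0.
    exists 1; rewrite al1; split; rewrite !(subrr, mulr0, addr0, mul0r); nra.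
  by apply: oneD_pos => //; rewrite lt_neqAle eq_sym al1.
have [be0|be0] := leP be 0.
  exists 1; split; rewrite !(subrr, mulr0, mul0r, add0r); nra.
have [s [h1 h2]] := @oneD_pos d a be al t be0 al0 ht.
by exists s.
Qed.
End OneD.

Section Vec.
Variables (R : realType) (n : nat) (Q : 'M[R]_n) (q : 'cV[R]_n) (c : R).

Let e (u v : 'cV[R]_n) := (u^T *m Q *m v) 0 0.

Lemma eL (u v w : 'cV[R]_n) (a b : R) :
  e (a *: u + b *: v) w = a * e u w + b * e v w.
Proof. by rewrite /e linearD !linearZ /= !mulmxDl -!scalemxAl !mxE. Qed.

Lemma eR (u v w : 'cV[R]_n) (a b : R) :
  e u (a *: v + b *: w) = a * e u v + b * e u w.
Proof. by rewrite /e mulmxDr -!scalemxAr !mxE. Qed.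

Lemma linq (v w : 'cV[R]_n) (a b : R) :
  (q^T *m (a *: v + b *: w)) 0 0 = a * (q^T *m v) 0 0 + b * (q^T *m w) 0 0.
Proof. by rewrite mulmxDr -!scalemxAr !mxE. Qed.

Lemma quad_line (x y : 'cV[R]_n) : exists A, forall s,
  quad_fun Q q c ((1 - s) *: x + s *: y) =
  (1 - s) * quad_fun Q q c x + s * quad_fun Q q c y + A * s * (s - 1).
Proof.
exists (e x x - e x y - e y x + e y y) => s.
rewrite /quad_fun -/(e _ _) -/(e x x) -/(e y y) eL !eR linq.
rewrite /e; ring.
Qed.
End Vec.

Theorem theorem4p1 (R : realType) (n : nat) (M : 'cV[R]_n -> Prop)
  (f g : 'cV[R]_n -> R) :
  affine_manifold M -> is_quadratic f -> is_quadratic g ->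
  convex2 (image_plus_orthant M f g).
Proof.
move=> [_ hM] [Q1 [q1 [c1 [_ hf]]]] [Q2 [q2 [c2 [_ hg]]]].
move=> [a1 a2] [b1 b2] t [x [Mx [u1 [v1 [hu1 [hv1 ea]]]]]]
  [y [My [u2 [v2 [hu2 [hv2 eb]]]]]] ht /=.
case: ea => -> ->; case: eb => -> ->.
have [A hA] := quad_line Q1 q1 c1 x y.
have [B hB] := quad_line Q2 q2 c2 x y.
have [s [h1 h2]] := oneD A B (f y - f x) (g y - g x) ht.
exists ((1 - s) *: x + s *: y); split; first exact: hM.
have hfz : f ((1 - s) *: x + s *: y) = (1 - s) * f x + s * f y + A * s * (s - 1).
  by rewrite !hf hA.
have hgz : g ((1 - s) *: x + s *: y) = (1 - s) * g x + s * g y + B * s * (s - 1).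
  by rewrite !hg hB.
case/andP: ht => t0 t1.
exists ((1 - t) * (f x + u1) + t * (f y + u2) - f ((1 - s) *: x + s *: y)).
exists ((1 - t) * (g x + v1) + t * (g y + v2) - g ((1 - s) *: x + s *: y)).
split; first by rewrite hfz; nra.
split; first by rewrite hgz; nra.
congr (_, _); ring.
Qed.
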